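(* Let $p$ be a prime and $k$ a positive integer. Let $A,B,K\in\mathbb{Z}[x,y]$ be homogeneous polynomials with $K^r=\gcd(A^3,B^2)$ for some positive integer $r$, let $R=\mathrm{Res}(A^3/K^r,B^2/K^r)$, and let $\nu(k)=\max\{\lceil 12k/r\rceil,v_p(R)\}$. Let $\mathcal{U}=\{(a,b)\in\mathbb{Z}^2:p^{4k}\mid A(a,b),\ p^{6k}\mid B(a,b)\}$. If $(a_1,b_1)\in\mathcal{U}$ and $\gcd(a_1,b_1,p)=1$, then $(a_1+p^{\nu(k)}\mathbb{Z})\times(b_1+p^{\nu(k)}\mathbb{Z})\subseteq\mathcal{U}$.
   Context: $\gcd(F,G)$ denotes the polynomial with integer coefficients of highest possible degree and smallest possible positive leading coefficient (lexicographic ordering) dividing both $F$ and $G$ in $\mathbb{Q}[x,y]$. $\mathrm{Res}$ is the resultant of homogeneous binary forms. *)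

(* Defs.v *)
From HB Require Import structures.
From mathcomp Require Import all_boot all_order all_algebra.
From mathcomp Require Import mpoly.
Set Implicit Arguments. Unset Strict Implicit. Unset Printing Implicit Defensive.
Import Order.TTheory GRing.Theory Num.Theory.
Local Open Scope ring_scope.

(* Z[x,y] and Q[x,y]; variable 0 is x, variable 1 is y. *)
Notation zpoly2 := {mpoly int[2]}.
Notation qpoly2 := {mpoly rat[2]}.

Definition toQ (F : zpoly2) : qpoly2 := map_mpoly (fun z : int => z%:~R) F.

Definition qdvd (D F : qpoly2) : Prop := exists Q : qpoly2, F = D * Q.

Definition qcommon (D : qpoly2) (F G : zpoly2) : Prop :=
  qdvd D (toQ F) /\ qdvd D (toQ G).

(* gcd(F,G) = D, following the paper: D has integer coefficients, divides
   F and G in Q[x,y], has the highest possible degree among common divisors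
   in Q[x,y], and, among integer polynomials with these properties, has the
   smallest possible positive leading coefficient (leading coefficient w.r.t.
   the monomial order of the mpoly library). *)
Definition is_gcd (F G D : zpoly2) : Prop :=
  [/\ qcommon (toQ D) F G,
      (forall E : qpoly2, qcommon E F G -> (msize E <= msize D)%N),
      0 < mleadc D &
      (forall E : zpoly2, qcommon (toQ E) F G -> msize E = msize D ->
          0 < mleadc E -> mleadc D <= mleadc E)].

Definition homogeneous (F : zpoly2) : Prop := exists d : nat, F \is d.-homog.

(* degree of a binary form (total degree; 0 for the zero form) *)
Definition fdeg (F : zpoly2) : nat := (msize F).-1.

(* coefficient of x^(d-i) y^i in F *)
Definition fcoef (F : zpoly2) (d i : nat) : int :=
  F@_[multinom (if val t == 0%N then (d - i)%N else i) | t < 2].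

(* Sylvester matrix of binary forms F (degree m) and G (degree n):
   rows 0..n-1 contain the coefficients of F shifted, rows n..n+m-1 those of G. *)
Definition sylvester (F G : zpoly2) (m n : nat) : 'M[int]_(n + m) :=
  \matrix_(i < n + m, j < n + m)
    if (i < n)%N then
      (if (i <= j)%N && (j <= i + m)%N then fcoef F m (j - i) else 0)
    else
      (if (i - n <= j)%N && (j <= i - n + n)%N then fcoef G n (j - (i - n)) else 0).

Definition Res (F G : zpoly2) : int := \det (sylvester F G (fdeg F) (fdeg G)).

Definition ev (F : zpoly2) (a b : int) : int :=
  F.@[fun t : 'I_2 => if val t == 0%N then a else b].

Definition vp (p : nat) (z : int) : nat := logn p `|z|%N.

Definition ceil_div (m r : nat) : nat := ((m + r.-1) %/ r)%N.

Definition inU (p k : nat) (A B : zpoly2) (a b : int) : Prop :=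
  ((p ^ (4 * k))%N%:Z %| ev A a b)%Z /\ ((p ^ (6 * k))%N%:Z %| ev B a b)%Z.

(* Main.v *)
Require Import Defs.
From HB Require Import structures.
From mathcomp Require Import all_boot all_order all_algebra.
From mathcomp Require Import mpoly.
From mathcomp Require Import zify ring.
Set Implicit Arguments. Unset Strict Implicit. Unset Printing Implicit Defensive.
Import Order.TTheory GRing.Theory Num.Theory.
Local Open Scope ring_scope.

Definition mk (d k : nat) : 'X_{1..2} :=
  [multinom (if val t == 0%N then (d - k)%N else k) | t < 2].


Definition hmg (R : comNzRingType) (d : nat) (p : {poly R}) : {mpoly R[2]} :=
  \sum_(k < d.+1) p`_k *: 'X_[mk d k].

Lemma mkD d e k l : (k <= d)%N -> (l <= e)%N ->
  (mk d k + mk e l)%MM = mk (d + e) (k + l).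
Proof.
move=> hk hl; apply/mnmP => i; rewrite mnmDE !mnmE.
case: (val i == 0%N) => //; lia.
Qed.

Lemma mk_inj d k l : (k <= d)%N -> (l <= d)%N -> mk d k = mk d l -> k = l.
Proof.
move=> hk hl /mnmP /(_ (@Ordinal 2 1 isT)); rewrite !mnmE /=; done.
Qed.

Lemma mdeg_mk d k : (k <= d)%N -> mdeg (mk d k) = d.
Proof.
move=> hk; rewrite mdegE big_ord_recr big_ord_recr big_ord0 /= !mnmE /=; lia.
Qed.

Lemma hmgD (R : comNzRingType) d (p q : {poly R}) : hmg d (p + q) = hmg d p + hmg d q.
Proof. by rewrite /hmg -big_split /=; apply: eq_bigr => i _; rewrite coefD scalerDl. Qed.

Lemma hmg0 (R : comNzRingType) d : hmg d (0 : {poly R}) = 0.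
Proof. by rewrite /hmg big1 // => i _; rewrite coef0 scale0r. Qed.

Lemma hmgZ (R : comNzRingType) d (c : R) (p : {poly R}) : hmg d (c *: p) = c *: hmg d p.
Proof. by rewrite /hmg scaler_sumr; apply: eq_bigr => i _; rewrite coefZ scalerA. Qed.

Lemma hmg_sum (R : comNzRingType) d (I : Type) (s : seq I) (P : pred I) (F : I -> {poly R}) :
  hmg d (\sum_(i <- s | P i) F i) = \sum_(i <- s | P i) hmg d (F i).
Proof. exact: (big_morph (@hmg R d) (@hmgD R d) (@hmg0 R d)). Qed.

Lemma hmgXn (R : comNzRingType) d k : (k <= d)%N -> hmg d ('X^k : {poly R}) = 'X_[mk d k].
Proof.
move=> hk; rewrite /hmg (bigD1 (Ordinal (hk : k < d.+1)%N)) //= coefXn eqxx scale1r.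
rewrite big1 ?addr0 // => i /eqP hi; rewrite coefXn.
case: eqP => [h|]; last by rewrite scale0r.
by exfalso; apply: hi; apply: val_inj.
Qed.

Lemma poly_exp (R : comNzRingType) (p : {poly R}) d : (size p <= d.+1)%N ->
  p = \sum_(k < d.+1) p`_k *: 'X^k.
Proof.
move=> hs; apply/polyP => j; rewrite coef_sum.
under eq_bigr do rewrite coefZ coefXn.
case: (ltnP j d.+1) => hj.
  rewrite (bigD1 (Ordinal hj)) //= eqxx mulr1 big1 ?addr0 // => i /eqP hi.
  case: eqP => [h|]; last by rewrite mulr0.
  by exfalso; apply: hi; apply: val_inj.
rewrite nth_default; last exact: leq_trans hs hj.
rewrite big1 // => i _; case: eqP => [h|]; last by rewrite mulr0.
by move: (ltn_ord i); rewrite -h ltnNge hj.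
Qed.

Lemma hmgM (R : comNzRingType) d e (p q : {poly R}) : (size p <= d.+1)%N -> (size q <= e.+1)%N ->
  hmg d p * hmg e q = hmg (d + e) (p * q).
Proof.
move=> hp hq.
rewrite {2}(poly_exp hp) {2}(poly_exp hq).
rewrite [in RHS]big_distrl /= hmg_sum [hmg d p]/hmg [hmg e q]/hmg big_distrl /=.
apply: eq_bigr => k _.
rewrite [in RHS]big_distrr /= hmg_sum big_distrr /=; apply: eq_bigr => l _.
have -> : (p`_k *: 'X^k) * (q`_l *: 'X^l) = (p`_k * q`_l) *: ('X^(k+l) : {poly R}).
  by rewrite exprD -scalerAl -scalerAr scalerA.
rewrite hmgZ (@hmgXn R (d+e) (k+l)); last by rewrite leq_add // -ltnS.
rewrite -(@mkD d e k l); [|by rewrite -ltnS|by rewrite -ltnS].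
rewrite mpolyXD -!mul_mpolyC mulrACA.
by rewrite mpolyCM.
Qed.



Lemma mcoeff_hom (R : comNzRingType) d (p : {poly R}) m :
  (hmg d p)@_m = \sum_(k < d.+1) p`_k * (mk d k == m)%:R.
Proof.
rewrite /hmg raddf_sum /=; apply: eq_bigr => k _.
by rewrite mcoeffZ mcoeffX.
Qed.

Lemma mcoeff_hom_mk (R : comNzRingType) d (p : {poly R}) k : (k <= d)%N -> (hmg d p)@_(mk d k) = p`_k.
Proof.
move=> hk; rewrite mcoeff_hom (bigD1 (Ordinal (hk : k < d.+1)%N)) //= eqxx mulr1.
rewrite big1 ?addr0 // => i /eqP hi.
case: eqP => [/(mk_inj (ltn_ord i : (i <= d)%N) hk) h|]; last by rewrite mulr0.
by exfalso; apply: hi; apply: val_inj.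
Qed.

Lemma mk_of m d : mdeg m = d -> m = mk d (m (@Ordinal 2 1 isT)).
Proof.
move=> hd; apply/mnmP => i; rewrite mnmE.
move: hd; rewrite mdegE big_ord_recr big_ord_recr big_ord0 /= => hd.
have e0 : (widen_ord (leqnSn 1) (@ord_max 0)) = (@Ordinal 2 0 isT) by apply: val_inj.
have e1 : (@ord_max 1) = (@Ordinal 2 1 isT) by apply: val_inj.
rewrite e0 e1 in hd.
case: i => [[|[|i]] hi] //=.
  have -> : (@Ordinal 2 0 hi) = (@Ordinal 2 0 isT) by apply: val_inj.
  lia.
by have -> : (@Ordinal 2 1 hi) = (@Ordinal 2 1 isT) by apply: val_inj.
Qed.

Lemma homE (R : comNzRingType) (F : {mpoly R[2]}) d : F \is d.-homog ->
  F = hmg d (\poly_(k < d.+1) F@_(mk d k)).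
Proof.
move=> hF; apply/mpolyP => m; rewrite mcoeff_hom.
have [hd|hd] := eqVneq (mdeg m) d.
  have hm := mk_of hd.
  have hk : (m (@Ordinal 2 1 isT) < d.+1)%N.
    move: hd; rewrite mdegE big_ord_recr big_ord_recr big_ord0 /= => <-.
    have -> : (@ord_max 1) = (@Ordinal 2 1 isT) by apply: val_inj.
    lia.
  rewrite (bigD1 (Ordinal hk)) //= coef_poly hk -hm eqxx mulr1.
  rewrite big1 ?addr0 // => i /eqP hi.
  case: eqP => [h|]; last by rewrite mulr0.
  exfalso; apply: hi; apply: val_inj => /=.
  rewrite hm in h; exact: (mk_inj (ltn_ord i : (i <= d)%N) (hk : (_ <= d)%N) h).
rewrite (dhomog_nemf_coeff hF hd) big1 // => i _.
case: eqP => [h|]; last by rewrite mulr0.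
by move: hd; rewrite -h mdeg_mk ?eqxx // -ltnS.
Qed.


Lemma ev_mk (d k : nat) (a b : int) : ev 'X_[mk d k] a b = a ^+ (d - k) * b ^+ k.
Proof.
by rewrite /ev mevalX big_ord_recr big_ord_recr big_ord0 /= mul1r !mnmE.
Qed.

Lemma ev_hom d (p : {poly int}) a b :
  ev (hmg d p) a b = \sum_(k < d.+1) p`_k * (a ^+ (d - k) * b ^+ k).
Proof.
rewrite /ev /hmg raddf_sum /=; apply: eq_bigr => k _.
by rewrite mevalZ -/(ev _ a b) ev_mk.
Qed.

Lemma evM (P Q : {mpoly int[2]}) a b : ev (P * Q) a b = ev P a b * ev Q a b.
Proof. by rewrite /ev mevalM. Qed.

Lemma evX (P : {mpoly int[2]}) n a b : ev (P ^+ n) a b = ev P a b ^+ n.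
Proof.
elim: n => [|n IH]; first by rewrite !expr0 /ev meval1.
by rewrite !exprS evM IH.
Qed.

Lemma toQM (P Q : {mpoly int[2]}) : toQ (P * Q) = toQ P * toQ Q.
Proof. by rewrite /toQ rmorphM. Qed.

Lemma toQ_hom d (p : {poly int}) : toQ (hmg d p) = hmg d (map_poly intr p).
Proof.
rewrite /toQ /hmg raddf_sum /=; apply: eq_bigr => k _.
by rewrite map_mpolyZ map_mpolyX coef_map.
Qed.

Lemma msize_toQ (P : {mpoly int[2]}) : msize (toQ P) = msize P.
Proof.
rewrite !msizeE; apply: perm_big; apply: msupp_map_mpoly.
exact: intr_inj.
Qed.


Lemma homog_factor (P F : {mpoly int[2]}) da c :
  P != 0 -> P \is da.-homog -> P * F \is c.-homog -> F \is (c - da)%N.-homog.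
Proof.
move=> nzP hP hPF.
have hpart := @pihomog_partitionE 2 int mdeg (msize F) F (leqnn _).
have key : forall j : nat, (da + j)%N != c -> pihomog mdeg j F = 0.
  move=> j hj.
  have [hjs|hjs] := ltnP j (msize F); last first.
    rewrite pihomogE big_seq_cond big_pred0 // => m; apply/negbTE.
    apply/negP => /andP [/msize_mdeg_lt hm /eqP hmj]. have h2 : mdeg m = j by exact: hmj. have h3 : (mdeg m < msize F)%N by exact: hm. lia.
  have : pihomog mdeg (da + j) (P * F) = P * pihomog mdeg j F.
    rewrite {1}hpart mulr_sumr raddf_sum /= (bigD1 (Ordinal hjs)) //=.
    rewrite pihomog_dE; last by apply: dhomogM => //; exact: pihomogP.
    rewrite big1 ?addr0 // => i /eqP hi.
    apply: (pihomog_ne0 (d := (da + i)%N)); last by apply: dhomogM => //; exact: pihomogP.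
    apply/negP => /eqP h; apply: hi; apply: val_inj => /=; lia.
  rewrite (pihomog_ne0 _ hPF); last by rewrite eq_sym.
  by move/esym/eqP; rewrite mulf_eq0 (negbTE nzP) => /eqP.
rewrite hpart; apply: rpred_sum => j _.
have [hj|hj] := eqVneq (da + j)%N c; last by rewrite key // rpred0.
have -> : (c - da)%N = j by lia.
exact: pihomogP.
Qed.


Definition fhat (F : {mpoly int[2]}) m : {poly int} := \poly_(k < m.+1) fcoef F m k.

Lemma F_hmg (F : {mpoly int[2]}) m : F \is m.-homog -> F = hmg m (fhat F m).
Proof. exact: homE. Qed.

Lemma size_fhat F m : (size (fhat F m) <= m.+1)%N.
Proof. exact: size_poly. Qed.

Lemma sylvE F G m n (i j : 'I_(n + m)) : sylvester F G m n i j =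
  if (i < n)%N then ('X^i * fhat F m)`_j else ('X^(i - n) * fhat G n)`_j.
Proof.
rewrite mxE !coefXnM !coef_poly.
by repeat (case: ifP => ?); try done; lia.
Qed.

Lemma sum_cast (n1 n2 : nat) (E : nat -> int) : n1 = n2 ->
  \sum_(j < n1) E j = \sum_(j < n2) E j.
Proof. by move=> ->. Qed.

Lemma partA (F G : {mpoly int[2]}) m n (d a b : int) :
  F \is m.-homog -> G \is n.-homog -> (0 < n + m)%N ->
  (d %| ev F a b)%Z -> (d %| ev G a b)%Z ->
  (d %| \det (sylvester F G m n) * a ^+ (n + m).-1)%Z /\
  (d %| \det (sylvester F G m n) * b ^+ (n + m).-1)%Z.
Proof.
move=> hF hG hN dF dG.
set S := sylvester F G m n; set N1 := (n + m).-1.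
pose x : 'cV[int]_(n + m) := \col_j (a ^+ (N1 - j) * b ^+ j).
have hSx : forall i, (d %| (S *m x) i ord0)%Z.
  move=> i; rewrite mxE.
  case: (ltnP i n) => hi.
    under eq_bigr do rewrite sylvE hi !mxE.
    rewrite (@sum_cast _ N1.+1 (fun j => ('X^i * fhat F m)`_j * (a ^+ (N1 - j) * b ^+ j))); last by lia.
    rewrite -ev_hom.
    have -> : N1 = (n.-1 + m)%N by lia.
    rewrite -hmgM; last exact: size_fhat; last by rewrite size_polyXn; lia.
    rewrite -F_hmg // hmgXn; last by lia.
    by rewrite evM; apply: dvdz_mull.
  under eq_bigr do rewrite sylvE ltnNge hi /= !mxE.
  rewrite (@sum_cast _ N1.+1 (fun j => ('X^(i - n) * fhat G n)`_j * (a ^+ (N1 - j) * b ^+ j))); last by lia.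
  rewrite -ev_hom.
  have -> : N1 = (m.-1 + n)%N by move: (ltn_ord i); lia.
  rewrite -hmgM; last exact: size_fhat; last by rewrite size_polyXn; move: (ltn_ord i); lia.
  rewrite -F_hmg // hmgXn; last by move: (ltn_ord i); lia.
  by rewrite evM; apply: dvdz_mull.
have hx : forall j, (d %| \det S * x j ord0)%Z.
  have e : \adj S *m (S *m x) = (\det S) *: x by rewrite mulmxA mul_adj_mx mul_scalar_mx.
  move=> j; have := congr1 (fun M : 'M[int]_(n + m, 1) => M j ord0) e; rewrite /= !mxE => <-.
  by apply: rpred_sum => i _; apply: dvdz_mull; exact: hSx.
split.
  have := hx (Ordinal hN); rewrite mxE /= subn0 expr0 mulr1; done.
have hN1 : (N1 < n + m)%N by lia.
have := hx (Ordinal hN1); rewrite mxE /= subnn expr0 mul1r; done.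
Qed.


Lemma msize_hmg e (dd : {poly rat}) k : (k <= e)%N -> dd`_k != 0 ->
  (e.+1 <= msize (hmg e dd))%N.
Proof.
move=> hk hd.
have hin : mk e k \in msupp (hmg e dd) by rewrite mcoeff_msupp mcoeff_hom_mk.
by have := msize_mdeg_lt hin; rewrite mdeg_mk.
Qed.

Lemma qdvd_hmg e m (dd pq : {poly rat}) : (size pq <= m.+1)%N ->
  (dd %| pq)%R -> size dd = e.+1 -> qdvd (hmg e dd) (hmg m pq).
Proof.
move=> hs hdv hsd.
have [->|nz] := eqVneq pq 0; first by exists 0; rewrite hmg0 mulr0.
have nzd : dd != 0 by rewrite -size_poly_eq0 hsd.
have e1 := divpK hdv.
set q := pq %/ dd in e1.
have nzq : q != 0 by apply: contra_neq nz => hq; rewrite -e1 hq mul0r.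
have hsz : size pq = (size q + size dd).-1 by rewrite -e1 size_mul.
exists (hmg (m - e) q).
rewrite hsd addnS /= in hsz.
have sq : (0 < size q)%N by rewrite size_poly_gt0.
have [hq1 hem] : (size q <= (m - e).+1)%N /\ (e <= m)%N.
  move: hsz hs sq. set s1 := size q. set s2 := size pq. clear. lia.
rewrite hmgM; [|by rewrite hsd|exact: hq1].
have -> : (e + (m - e))%N = m by lia.
by rewrite mulrC e1.
Qed.

Lemma size_full (p : {poly rat}) m : (size p <= m.+1)%N -> p`_m != 0 -> size p = m.+1.
Proof.
move=> hs hm; apply/eqP; rewrite eqn_leq hs /=.
case: (ltnP m (size p)) => // h.
by rewrite nth_default // eqxx in hm.
Qed.

Lemma kernel_poly m n (f g : {poly rat}) (w : 'rV[rat]_(n + m)) :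
  (size f <= m.+1)%N -> (size g <= n.+1)%N ->
  w *m (\matrix_(i < n + m, j < n + m) (if (i < n)%N then ('X^i * f)`_j else ('X^(i - n) * g)`_j)) = 0 ->
  (\sum_(i < n) w 0 (lshift m i) *: 'X^i) * f + (\sum_(i < m) w 0 (rshift n i) *: 'X^i) * g = 0.
Proof.
move=> hf hg hw.
rewrite !mulr_suml.
apply/polyP => j; rewrite coef0 coefD !coef_sum.
under eq_bigr do rewrite -scalerAl coefZ.
rewrite [X in _ + X](eq_bigr (fun i => w 0 (rshift n i) * ('X^i * g)`_j)); last by move=> i _; rewrite -scalerAl coefZ.
case: (ltnP j (n + m)) => hj.
  have := congr1 (fun M : 'M[rat]_(1, n + m) => M 0 (Ordinal hj)) hw.
  rewrite !mxE big_split_ord /= => H; rewrite -[in RHS]H.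
  congr (_ + _); apply: eq_bigr => i _; rewrite mxE /=.
    by rewrite ltn_ord.
  have -> : (n + i < n)%N = false by lia.
  by have -> : (n + i - n)%N = i by lia.
rewrite !big1 ?addr0 // => i _; rewrite coefXnM;
  (case: ifP => _; first by rewrite mulr0);
  rewrite nth_default ?mulr0 //; move: hf hg hj (ltn_ord i); set s1 := size f; set s2 := size g; lia.
Qed.

Lemma uv0_w0 m n (w : 'rV[rat]_(n + m)) :
  \sum_(i < n) w 0 (lshift m i) *: 'X^i = 0 :> {poly rat} -> \sum_(i < m) w 0 (rshift n i) *: 'X^i = 0 :> {poly rat} -> w = 0.
Proof.
move=> hu hv; apply/rowP => i; rewrite mxE.
have i0 : (0 : 'I_1) = ord0 by apply: val_inj.
case: (splitP i) => i' hi.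
  have -> : i = lshift m i' by apply: val_inj.
  have := congr1 (fun p : {poly rat} => p`_i') hu.
  rewrite coef_sum coef0 (bigD1 i') //= coefZ coefXn eqxx mulr1 big1 ?addr0 -?i0 //.
  move=> j /eqP hj; rewrite coefZ coefXn; case: eqP => [h|]; last by rewrite mulr0.
  by exfalso; apply: hj; apply: val_inj.
have -> : i = rshift n i' by apply: val_inj.
have := congr1 (fun p : {poly rat} => p`_i') hv.
rewrite coef_sum coef0 (bigD1 i') //= coefZ coefXn eqxx mulr1 big1 ?addr0 -?i0 //.
move=> j /eqP hj; rewrite coefZ coefXn; case: eqP => [h|]; last by rewrite mulr0.
by exfalso; apply: hj; apply: val_inj.
Qed.


Lemma size_sumX n (c : 'I_n -> rat) : (size (\sum_(i < n) c i *: 'X^i : {poly rat})%R <= n)%N.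
Proof.
apply/leq_sizeP => j hj; rewrite coef_sum big1 // => i _.
rewrite coefZ coefXn; case: eqP => [h|]; last by rewrite mulr0.
by move: (ltn_ord i); rewrite -h ltnNge hj.
Qed.

Lemma caseA_dvd m (p : {poly rat}) : (size p <= m.+1)%N -> p`_m = 0 ->
  qdvd (hmg 1 1) (hmg m p).
Proof.
move=> hs h0.
have hs' : (size p <= m)%N.
  apply/leq_sizeP => j hj; case: (eqVneq j m) => [->//|hne].
  by apply: nth_default; apply: leq_trans hs _; lia.
case: m hs h0 hs' => [|m] hs h0 hs'.
  have -> : p = 0 by apply/eqP; rewrite -size_poly_eq0; lia.
  by exists 0; rewrite hmg0 mulr0.
exists (hmg m p); rewrite hmgM //; last by rewrite size_poly1.
by rewrite mul1r.
Qed.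

Lemma partB (F G : {mpoly int[2]}) m n :
  F \is m.-homog -> G \is n.-homog ->
  (forall D : qpoly2, (2 <= msize D)%N -> qdvd D (toQ F) -> qdvd D (toQ G) -> False) ->
  \det (sylvester F G m n) != 0.
Proof.
move=> hF hG hD.
pose fq : {poly rat} := map_poly intr (fhat F m).
pose gq : {poly rat} := map_poly intr (fhat G n).
have eF : toQ F = hmg m fq by rewrite {1}(F_hmg hF) toQ_hom.
have eG : toQ G = hmg n gq by rewrite {1}(F_hmg hG) toQ_hom.
have sf : (size fq <= m.+1)%N by rewrite size_rat_int_poly size_fhat.
have sg : (size gq <= n.+1)%N by rewrite size_rat_int_poly size_fhat.
have caseA : ~ (fq`_m = 0 /\ gq`_n = 0).
  move=> [f0 g0]; apply: (hD (hmg 1 1)).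
  - by apply: (@msize_hmg 1 1 0) => //; rewrite coef1 oner_neq0.
  - by rewrite eF; apply: caseA_dvd.
  - by rewrite eG; apply: caseA_dvd.
have caseB : (size (gcdp fq gq) <= 1)%N.
  rewrite leqNgt; apply/negP => h2.
  set dd := gcdp fq gq in h2.
  have nzd : dd != 0 by rewrite -size_poly_eq0; lia.
  apply: (hD (hmg (size dd).-1 dd)).
  - apply: leq_trans (@msize_hmg (size dd).-1 dd (size dd).-1 (leqnn _) _); first lia.
    by rewrite -/(lead_coef dd) lead_coef_eq0.
  - rewrite eF; apply: qdvd_hmg => //; [exact: dvdp_gcdl | rewrite prednK //; exact: ltn_trans (isT : (0 < 1)%N) h2].
  - rewrite eG; apply: qdvd_hmg => //; [exact: dvdp_gcdr | rewrite prednK //; exact: ltn_trans (isT : (0 < 1)%N) h2].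
have cop : coprimep fq gq.
  rewrite coprimep_def eqn_leq caseB /= lt0n size_poly_eq0 gcdp_eq0.
  apply/negP => /andP [/eqP f0 /eqP g0]; apply: caseA.
  by rewrite f0 g0 !coef0.
apply/negP => /eqP hdet.
have : \det (map_mx intr (sylvester F G m n)) == 0 :> rat.
  by rewrite det_map_mx hdet rmorph0.
case/det0P => w wn0 hw.
have hM : map_mx intr (sylvester F G m n) =
    \matrix_(i < n + m, j < n + m) (if (i < n)%N then ('X^i * fq)`_j else ('X^(i - n) * gq)`_j).
  apply/matrixP => i j; rewrite [LHS]mxE sylvE [RHS]mxE.
  by case: ifP => _; rewrite !coefXnM; case: ifP => _; rewrite ?coef_map ?rmorph0.
rewrite hM in hw.
have huv := kernel_poly sf sg hw.
set u := \sum_(i < n) w 0 (lshift m i) *: 'X^i in huv.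
set v := \sum_(i < m) w 0 (rshift n i) *: 'X^i in huv.
have su : (size u <= n)%N by exact: size_sumX.
have sv : (size v <= m)%N by exact: size_sumX.
have [hu hv] : u = 0 /\ v = 0.
  case: (eqVneq fq`_m 0) => hfm.
    have hgn : gq`_n != 0 by apply/eqP => h; apply: caseA.
    have sg' := size_full sg hgn.
    have nzg : gq != 0 by rewrite -size_poly_eq0 sg'.
    have hdv : (gq %| u * fq)%R.
      have -> : u * fq = - (v * gq) by apply/eqP; rewrite -addr_eq0 huv.
      by rewrite dvdpNr dvdp_mull.
    have cop2 : coprimep gq fq by rewrite coprimep_sym.
    rewrite Gauss_dvdpl // in hdv.
    have u0 : u = 0.
      apply/eqP; apply/negPn/negP => nzu; have := dvdp_leq nzu hdv.
      move: su; rewrite sg'; set s := size u; lia.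
    split => //; move: huv; rewrite u0 mul0r add0r => /eqP.
    by rewrite mulf_eq0 (negbTE nzg) orbF => /eqP.
  have sf' := size_full sf hfm.
  have nzf : fq != 0 by rewrite -size_poly_eq0 sf'.
  have hdv : (fq %| v * gq)%R.
    have -> : v * gq = - (u * fq) by apply/eqP; rewrite -addr_eq0 addrC huv.
    by rewrite dvdpNr dvdp_mull.
  rewrite Gauss_dvdpl // in hdv.
  have v0 : v = 0.
    apply/eqP; apply/negPn/negP => nzv; have := dvdp_leq nzv hdv.
    move: sv; rewrite sf'; set s := size v; lia.
  split => //; move: huv; rewrite v0 mul0r addr0 => /eqP.
  by rewrite mulf_eq0 (negbTE nzf) orbF => /eqP.
by move/negP: wn0; apply; apply/eqP; apply: uv0_w0.
Qed.


Lemma pow_root p e t (z : int) : prime p -> (0 < e)%N ->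
  ((p ^ (t * e))%N%:Z %| z ^+ e)%Z -> ((p ^ t)%N%:Z %| z)%Z.
Proof.
move=> pp e0; rewrite !dvdzE !absz_nat abszX.
have [->|nz] := eqVneq `|z|%N 0%N; first by rewrite dvdn0.
have hz : (0 < `|z|)%N by rewrite lt0n.
rewrite !pfactor_dvdn ?expn_gt0 ?hz // lognX => h.
by move: h; rewrite mulnC leq_pmul2l.
Qed.

Lemma pow_up p t e (z : int) :
  ((p ^ t)%N%:Z %| z)%Z -> ((p ^ (t * e))%N%:Z %| z ^+ e)%Z.
Proof. by rewrite !dvdzE !absz_nat abszX expnM; apply: dvdn_exp2r. Qed.

Lemma val_split p n e r (x y : int) : prime p -> x != 0 -> logn p `|x| = e ->
  ((p ^ n)%N%:Z %| x ^+ r * y)%Z -> ((p ^ (n - r * e))%N%:Z %| y)%Z.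
Proof.
move=> pp nzx hl; rewrite !dvdzE !absz_nat abszM abszX.
have [->|nzy] := eqVneq `|y|%N 0%N; first by rewrite dvdn0.
have hy : (0 < `|y|)%N by rewrite lt0n.
have hx : (0 < `|x|)%N by rewrite absz_gt0.
rewrite !pfactor_dvdn ?muln_gt0 ?expn_gt0 ?hx ?hy // lognM ?expn_gt0 ?hx // lognX hl.
lia.
Qed.

Lemma dvd_from_cong (M D x y : int) : (M %| x - y)%Z -> (D %| M)%Z -> (D %| y)%Z -> (D %| x)%Z.
Proof.
move=> h1 h2 h3; have -> : x = (x - y) + y by rewrite subrK.
by apply: rpredD => //; apply: dvdz_trans h2 h1.
Qed.

Lemma pp_dvd (p s nu : nat) : (s <= nu)%N -> ((p ^ s)%N%:Z %| (p ^ nu)%N%:Z)%Z.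
Proof. by move=> h; rewrite dvdzE !absz_nat dvdn_exp2l. Qed.

Lemma cong_hmg d (q : {poly int}) M a b a1 b1 : (M %| a - a1)%Z -> (M %| b - b1)%Z ->
  (M %| ev (hmg d q) a b - ev (hmg d q) a1 b1)%Z.
Proof.
move=> ha hb; rewrite !ev_hom -sumrB; apply: rpred_sum => k _; rewrite -mulrBr.
apply: dvdz_mull.
have -> : a ^+ (d - k) * b ^+ k - a1 ^+ (d - k) * b1 ^+ k =
  (a ^+ (d - k) - a1 ^+ (d - k)) * b ^+ k + a1 ^+ (d - k) * (b ^+ k - b1 ^+ k) by ring.
apply: rpredD; [apply: dvdz_mulr | apply: dvdz_mull]; rewrite subrXX; exact: dvdz_mulr.
Qed.

Lemma cong_ev (P : {mpoly int[2]}) d M a b a1 b1 : P \is d.-homog ->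
  (M %| a - a1)%Z -> (M %| b - b1)%Z -> (M %| ev P a b - ev P a1 b1)%Z.
Proof. by move=> hP; rewrite (F_hmg hP); apply: cong_hmg. Qed.

Lemma ev_deg0 (P : {mpoly int[2]}) a b a1 b1 : P \is 0.-homog -> ev P a b = ev P a1 b1.
Proof. by move=> hP; rewrite (F_hmg hP) !ev_hom !big_ord1 /=. Qed.

Lemma prim_not (p : nat) (a1 b1 : int) : prime p -> gcdz (gcdz a1 b1) p%:Z = 1 ->
  ~~ (p %| `|a1|)%N || ~~ (p %| `|b1|)%N.
Proof.
move=> pp hg; rewrite -negb_and; apply/negP => /andP [h1 h2].
have : (p%:Z %| gcdz (gcdz a1 b1) p%:Z)%Z.
  by rewrite !dvdz_gcd !dvdzE !absz_nat h1 h2 dvdnn.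
rewrite hg dvdz1 absz_nat => /eqP h.
by move: pp; rewrite h.
Qed.

Lemma Res_div p s N (R a1 b1 : int) : prime p -> gcdz (gcdz a1 b1) p%:Z = 1 ->
  ((p ^ s)%N%:Z %| R * a1 ^+ N)%Z -> ((p ^ s)%N%:Z %| R * b1 ^+ N)%Z ->
  ((p ^ s)%N%:Z %| R)%Z.
Proof.
move=> pp hg; rewrite !dvdzE !absz_nat !abszM !abszX.
case/orP: (prim_not pp hg) => hn h1 h2.
  by move: h1; rewrite Gauss_dvdl // coprimeXl // coprimeXr // prime_coprime.
by move: h2; rewrite Gauss_dvdl // coprimeXl // coprimeXr // prime_coprime.
Qed.

Lemma vp_bound p s (R : int) : prime p -> R != 0 -> ((p ^ s)%N%:Z %| R)%Z -> (s <= vp p R)%N.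
Proof.
move=> pp nz; rewrite dvdzE absz_nat /vp pfactor_dvdn //.
by rewrite absz_gt0.
Qed.


Lemma nat_aux x y : (1 < y)%N -> ((x + y).-1 <= x)%N -> False.
Proof. lia. Qed.

Lemma ceil_le t r : (0 < r)%N -> (t <= ceil_div t r * r)%N.
Proof.
move=> r0; have := ltn_ceil (t + r.-1) r0; rewrite /ceil_div.
set q := ((t + r.-1) %/ r)%N; rewrite mulSn; lia.
Qed.

Lemma ceil_lt t r e : (0 < r)%N -> (e < ceil_div t r)%N -> (r * e < t)%N.
Proof.
move=> r0; rewrite /ceil_div leq_divRL // => h; lia.
Qed.

Unset Implicit Arguments.

Theorem lemma4p6 (p k r : nat) (A B K F G : {mpoly int[2]}) :
  prime p -> (0 < k)%N -> (0 < r)%N ->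
  homogeneous A -> homogeneous B -> homogeneous K ->
  is_gcd (A ^+ 3) (B ^+ 2) (K ^+ r) ->
  A ^+ 3 = K ^+ r * F -> B ^+ 2 = K ^+ r * G ->
  let nu := maxn (ceil_div (12 * k) r) (vp p (Res F G)) in
  forall a1 b1 : int,
    inU p k A B a1 b1 -> gcdz (gcdz a1 b1) p%:Z = 1 ->
    forall a b : int,
      (a == a1 %[mod (p ^ nu)%N%:Z])%Z -> (b == b1 %[mod (p ^ nu)%N%:Z])%Z ->
      inU p k A B a b.
Proof.
move=> pp k0 r0 [dA hA] [dB hB] [dK hK] hgcd eA eB nu a1 b1 [hA1 hB1] hprim a b ha hb.
case: hgcd => hcom hmax hlc hmin.
have nzK : K ^+ r != 0.
  by apply/negP => /eqP h; move: hlc; rewrite h mleadc0 ltxx.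
have hKr : K ^+ r \is (dK * r)%N.-homog by apply: dhomogMn.
have hF : F \is (fdeg F).-homog.
  have h1 : K ^+ r * F \is (dA * 3)%N.-homog by rewrite -eA; apply: dhomogMn.
  have h2 := homog_factor nzK hKr h1.
  have [->|nzF] := eqVneq F 0; first exact: dhomog0.
  exact: dhomog_msize h2.
have hG : G \is (fdeg G).-homog.
  have h1 : K ^+ r * G \is (dB * 2)%N.-homog by rewrite -eB; apply: dhomogMn.
  have h2 := homog_factor nzK hKr h1.
  have [->|nzG] := eqVneq G 0; first exact: dhomog0.
  exact: dhomog_msize h2.
have hD : forall D : qpoly2, (2 <= msize D)%N -> qdvd D (toQ F) -> qdvd D (toQ G) -> False.
  move=> D hD2 [Q1 hQ1] [Q2 hQ2].
  have nzD : D != 0 by apply/negP => /eqP h; move: hD2; rewrite h mmeasure0.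
  have hKpos : (0 < msize (K ^+ r))%N.
    by have := msize_mdeg_lt (mlead_supp nzK); case: (msize _).
  have nzKQ : toQ (K ^+ r) != 0.
    by apply/negP => /eqP h; move: hKpos; rewrite -msize_toQ h mmeasure0.
  have hc : qcommon (toQ (K ^+ r) * D) (A ^+ 3) (B ^+ 2).
    split; [exists Q1; rewrite eA toQM hQ1 mulrA //| exists Q2; rewrite eB toQM hQ2 mulrA //].
  have := hmax _ hc; rewrite msizeM // msize_toQ => h.
  exact: nat_aux hD2 h.
set M := (p ^ nu)%N%:Z.
have ha' : (M %| a - a1)%Z by rewrite -eqz_mod_dvd.
have hb' : (M %| b - b1)%Z by rewrite -eqz_mod_dvd.
have eA' : forall x y, ev A x y ^+ 3 = ev K x y ^+ r * ev F x y.
  by move=> x y; rewrite -!evX -evM eA.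
have eB' : forall x y, ev B x y ^+ 2 = ev K x y ^+ r * ev G x y.
  by move=> x y; rewrite -!evX -evM eB.
have hA13 : ((p ^ (12 * k))%N%:Z %| ev K a1 b1 ^+ r * ev F a1 b1)%Z.
  rewrite -eA'; have -> : (12 * k = 4 * k * 3)%N by rewrite mulnAC.
  exact: (pow_up 3 hA1).
have hB12 : ((p ^ (12 * k))%N%:Z %| ev K a1 b1 ^+ r * ev G a1 b1)%Z.
  rewrite -eB'; have -> : (12 * k = 6 * k * 2)%N by rewrite mulnAC.
  exact: (pow_up 2 hB1).
set c := ceil_div (12 * k) r.
have hcnu : (c <= nu)%N by apply: leq_maxl.
have main : ((p ^ (12 * k))%N%:Z %| ev K a b ^+ r * ev F a b)%Z /\
            ((p ^ (12 * k))%N%:Z %| ev K a b ^+ r * ev G a b)%Z.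
  have [hc|hc] := boolP ((p ^ c)%N%:Z %| ev K a1 b1)%Z.
    have hKc : ((p ^ c)%N%:Z %| ev K a b)%Z.
      exact: dvd_from_cong (cong_ev hK ha' hb') (pp_dvd p hcnu) hc.
    have hKr' := pow_up r hKc.
    have hle : (12 * k <= c * r)%N by apply: ceil_le.
    have hKr'' : ((p ^ (12 * k))%N%:Z %| ev K a b ^+ r)%Z.
      exact: dvdz_trans (pp_dvd p hle) hKr'.
    by split; apply: dvdz_mulr.
  set kv := ev K a1 b1 in hc hA13 hB12.
  have nzkv : kv != 0 by apply/negP => /eqP h; move: hc; rewrite h dvdz0.
  set e := logn p `|kv|.
  have hec : (e < c)%N.
    rewrite ltnNge; apply/negP => h; move/negP: hc; apply.
    rewrite dvdzE absz_nat pfactor_dvdn //; by rewrite absz_gt0.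
  have hre : (r * e < 12 * k)%N by apply: ceil_lt.
  have hKe : ((p ^ e)%N%:Z %| ev K a b)%Z.
    apply: dvd_from_cong (cong_ev hK ha' hb') (pp_dvd p _) _; first exact: leq_trans (ltnW hec) hcnu.
    by rewrite dvdzE absz_nat pfactor_dvdnn.
  set s := (12 * k - r * e)%N.
  have hF1 : ((p ^ s)%N%:Z %| ev F a1 b1)%Z by apply: val_split hA13.
  have hG1 : ((p ^ s)%N%:Z %| ev G a1 b1)%Z by apply: val_split hB12.
  have [hFs hGs] : ((p ^ s)%N%:Z %| ev F a b)%Z /\ ((p ^ s)%N%:Z %| ev G a b)%Z.
    have [hN|hN] := posnP (fdeg G + fdeg F)%N.
      move/eqP: hN; rewrite addn_eq0 => /andP [/eqP g0 /eqP f0].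
      rewrite f0 in hF; rewrite g0 in hG.
      by rewrite (ev_deg0 a b a1 b1 hF) (ev_deg0 a b a1 b1 hG).
    have [r1 r2] := partA hF hG hN hF1 hG1.
    have hR : ((p ^ s)%N%:Z %| Res F G)%Z := Res_div pp hprim r1 r2.
    have nzR : Res F G != 0 by apply: partB.
    have hsnu : (s <= nu)%N.
      exact: leq_trans (vp_bound pp nzR hR) (leq_maxr _ _).
    split.
      exact: dvd_from_cong (cong_ev hF ha' hb') (pp_dvd p hsnu) hF1.
    exact: dvd_from_cong (cong_ev hG ha' hb') (pp_dvd p hsnu) hG1.
  have hKre := pow_up r hKe.
  have e12 : (p ^ (12 * k))%N%:Z = (p ^ (e * r))%N%:Z * (p ^ s)%N%:Z.
    by rewrite -PoszM -expnD; congr (Posz (p ^ _)); rewrite /s [(e * r)%N]mulnC subnKC // ltnW.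
  by rewrite e12; split; apply: dvdz_mul.
case: main => mA mB; split.
  apply: (@pow_root p 3) => //; rewrite eA'.
  by have -> : (4 * k * 3 = 12 * k)%N by rewrite mulnAC.
apply: (@pow_root p 2) => //; rewrite eB'.
by have -> : (6 * k * 2 = 12 * k)%N by rewrite mulnAC.
Qed.
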